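(* Let $I=\begin{pmatrix}1&0\\0&1\end{pmatrix}$, $X=\begin{pmatrix}0&1\\1&0\end{pmatrix}$, $Z=\begin{pmatrix}1&0\\0&-1\end{pmatrix}$ and $Y=XZ$. For each $M:=M_1\otimes M_2\otimes M_3$ with $M_i\in\{I,X,Y,Z\}$ (an $8\times 8$ real matrix), the map $\sigma_M:V(G_{E_8})\to V(G_{E_8})$, $v_x\mapsto v_{Mx}$, is a well-defined automorphism of $G_{E_8}$. These automorphisms form a subgroup $L$ of $\mathrm{Aut}(G_{E_8})$ with $L\cong\mathbb{Z}_2^6$.
   Context: The $E_8$ root system $\Psi_{E_8}\subset\mathbb{R}^8$ consists of the 240 vectors $\pm e_i\pm e_j$ for $1\le i<j\le 8$, together with all $x=(x_1,\dots,x_8)$ with $x_i\in\{\pm1\}$ and $\prod_{i=1}^8x_i=1$. The graph $G_{E_8}$ has vertex set $\{v_x : x\in\Psi_{E_8}\}$ where $v_x=v_{-x}$ (so 120 vertices, one per line), and $v_x,v_y$ are adjacent iff $\langle x,y\rangle=0$ (standard inner product). *)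

(* Defs.v *)
From mathcomp Require Import all_boot all_order all_algebra all_fingroup all_solvable.
Set Implicit Arguments. Unset Strict Implicit. Unset Printing Implicit Defensive.
Import GRing.Theory Num.Theory.
Local Open Scope ring_scope.

(* Vectors of R^8 with integer coordinates (all roots have coordinates in
   {-1,0,1}), as column vectors so that a matrix M acts by M *m x. *)
Definition vec := 'cV[int]_8.

Definition e (i : 'I_8) : vec := delta_mx i 0.

Definition sgn (b : bool) : int := (-1) ^+ b.

Definition dot (x y : vec) : int := (x^T *m y) 0 0.

Definition is_root (x : vec) : bool :=
  [exists i : 'I_8, exists j : 'I_8, exists s1 : bool, exists s2 : bool,
     (i < j)%N && (x == sgn s1 *: e i + sgn s2 *: e j)]
  || ([forall i : 'I_8, (x i 0 == 1) || (x i 0 == -1)]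
      && (\prod_(i < 8) x i 0 == 1)).

(* A finite list of candidate vectors (all vectors with entries in {-1,0,1}),
   containing every root; psi_seq is the list of roots. *)
Definition cands : seq vec :=
  [seq \col_(i < 8) ((f i : nat)%:Z - 1) | f : {ffun 'I_8 -> 'I_3}].
Definition psi_seq : seq vec := [seq x <- cands | is_root x].

Definition Root := seq_sub psi_seq.

Definition line (x : Root) : {set Root} :=
  [set y : Root | (val y == val x) || (val y == - val x)].

(* Vertices of G_{E8}: lines of roots; v_x = v_{-x}. *)
Definition V := {A : {set Root} | A \in codom line}.

Definition vtx (x : Root) : V := exist _ (line x) (codom_f line x).

(* Adjacency: v_x ~ v_y iff <x,y> = 0 (independent of representatives). *)
Definition adj (u v : V) : bool :=
  [exists x in val u, exists y in val v, dot (val x) (val y) == 0].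

Definition Aut_G : {set {perm V}} :=
  [set s : {perm V} | [forall u, forall w, adj (s u) (s w) == adj u w]].

Definition mI : 'M[int]_2 := 1%:M.
Definition mX : 'M[int]_2 := \matrix_(i < 2, j < 2) (i != j)%:R.
Definition mZ : 'M[int]_2 := \matrix_(i < 2, j < 2) ((i == j)%:R * sgn (i == 1 :> nat)).
Definition mY : 'M[int]_2 := mX *m mZ.

Definition pauli (k : 'I_4) : 'M[int]_2 :=
  match val k with 0 => mI | 1 => mX | 2 => mY | _ => mZ end.

(* binary digit k of i (i = 4 i_2 + 2 i_1 + i_0) *)
Definition bit (k : nat) (i : 'I_8) : 'I_2 := inord ((i %/ 2 ^ k) %% 2).

Definition kron3 (A B C : 'M[int]_2) : 'M[int]_8 :=
  \matrix_(i < 8, j < 8)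
     (A (bit 2 i) (bit 2 j) * B (bit 1 i) (bit 1 j) * C (bit 0 i) (bit 0 j)).

Definition P := ('I_4 * 'I_4 * 'I_4)%type.
Definition Mof (t : P) : 'M[int]_8 := kron3 (pauli t.1.1) (pauli t.1.2) (pauli t.2).

(* Main.v *)
Require Import Defs.
From mathcomp Require Import all_boot all_order all_algebra all_fingroup all_solvable.
From mathcomp Require Import mxabelem abelian.
Import GRing.Theory Num.Theory.
Local Open Scope ring_scope.

Definition bt (k i : nat) : nat := ((i %/ 2 ^ k) %% 2)%N.
Definition xb (k : nat) : bool := (k == 1)%N || (k == 2)%N.
Definition sg (k r : nat) : int :=
  if k == 2%N then (if r == 0%N then -1 else 1)
  else if k == 3%N then (if r == 0%N then 1 else -1) else 1.
Definition pn (k r c : nat) : int :=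
  if c == nat_of_bool ((r == 1%N) != xb k) then sg k r else 0.
Definition MN (a b c i j : nat) : int :=
  pn a (bt 2 i) (bt 2 j) * pn b (bt 1 i) (bt 1 j) * pn c (bt 0 i) (bt 0 j).
Definition pN (a b c i : nat) : nat :=
  (4 * ((bt 2 i == 1%N) != xb a) + 2 * ((bt 1 i == 1%N) != xb b)
   + ((bt 0 i == 1%N) != xb c))%N.
Definition sN (a b c i : nat) : int := sg a (bt 2 i) * sg b (bt 1 i) * sg c (bt 0 i).
Definition xr (a b : nat) : nat :=
  (((a %% 2) != (b %% 2)) + 2 * (((a %/ 2) %% 2) != ((b %/ 2) %% 2)))%N.

Definition alln n (f : nat -> bool) := all f (iota 0 n).
Definition all3 (f : nat -> nat -> nat -> bool) :=
  alln 4 (fun a => alln 4 (fun b => alln 4 (fun c => f a b c))).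

Definition C1 := all3 (fun a b c => alln 8 (fun i => alln 8 (fun j =>
  (MN a b c i j == (j == pN a b c i)%:R * sN a b c i)))).
Lemma C1T : C1. Proof. by vm_compute. Qed.
Definition C2 := all3 (fun a b c => alln 8 (fun i =>
  [&& (pN a b c i < 8)%N, pN a b c (pN a b c i) == i &
     (sN a b c i == 1) || (sN a b c i == -1)])).
Lemma C2T : C2. Proof. by vm_compute. Qed.
Definition C4 := all3 (fun a b c => sN a b c 0 * sN a b c 1 * sN a b c 2 * sN a b c 3 *
  sN a b c 4 * sN a b c 5 * sN a b c 6 * sN a b c 7 == 1).
Lemma C4T : C4. Proof. by vm_compute. Qed.
Definition C5 := all3 (fun a b c => all3 (fun a' b' c' =>
  let a'' := xr a a' in let b'' := xr b b' in let c'' := xr c c' in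
  let eps := sN a' b' c' 0 * sN a b c (pN a' b' c' 0) * sN a'' b'' c'' 0 in
  alln 8 (fun k => (pN a b c (pN a' b' c' k) == pN a'' b'' c'' k) &&
     (sN a' b' c' k * sN a b c (pN a' b' c' k) == eps * sN a'' b'' c'' k)))).
Lemma C5T : C5. Proof. by vm_compute. Qed.
Definition xf (i j k : nat) : int := (k == i)%:R + (k == j)%:R.
Definition C6 := all3 (fun a b c => [|| (a == 0%N) && (b == 0%N) && (c == 0%N) |
  has (fun i => has (fun j => [&& (i < j)%N,
     has (fun k => sN a b c k * xf i j (pN a b c k) != xf i j k) (iota 0 8) &
     has (fun k => sN a b c k * xf i j (pN a b c k) != - xf i j k) (iota 0 8)])
   (iota 0 8)) (iota 0 8)]).
Lemma C6T : C6. Proof. by vm_compute. Qed.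
Definition C7 := alln 8 (fun i => (pN 0 0 0 i == i) && (sN 0 0 0 i == 1)).
Lemma C7T : C7. Proof. by vm_compute. Qed.
Definition C8 := alln 4 (fun a => alln 4 (fun b => [&& (xr a b < 4)%N, xr a b == xr b a,
   (xr a a == 0%N) & (xr a b == 0%N) ==> (a == b)])).
Lemma C8T : C8. Proof. by vm_compute. Qed.

Lemma allnP n f : alln n f -> forall i, (i < n)%N -> f i.
Proof. by move=> /allP H i Hi; apply: H; rewrite mem_iota add0n. Qed.
Arguments allnP {n f}.

Lemma all3P f : all3 f -> forall a b c, (a < 4)%N -> (b < 4)%N -> (c < 4)%N -> f a b c.
Proof.
move=> H a b c Ha Hb Hc.
by have := allnP (allnP (allnP H _ Ha) _ Hb) _ Hc.
Qed.
Arguments all3P {f}.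

Lemma pauliE k (r c : 'I_2) : pauli k r c = pn k r c.
Proof.
case: k => [[|[|[|[|k]]]] Hk] //; rewrite /pauli /=;
  rewrite /mI /mX /mY /mZ ?mxE ?big_ord_recr ?big_ord0 /= ?mxE;
  case: r => [[|[|r]] Hr] //; case: c => [[|[|c]] Hc] //.
Qed.

Lemma bitE k i : val (bit k i) = bt k i.
Proof. by rewrite /bit /= inordK // ltn_pmod. Qed.

Notation ta t := (val t.1.1).
Notation tb t := (val t.1.2).
Notation tc t := (val t.2).

Lemma MofE (t : P) (i j : 'I_8) : Mof t i j = MN (ta t) (tb t) (tc t) i j.
Proof. by rewrite /Mof /kron3 mxE !pauliE !bitE. Qed.

Definition p (t : P) (i : 'I_8) : 'I_8 := inord (pN (ta t) (tb t) (tc t) i).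
Definition s (t : P) (i : 'I_8) : int := sN (ta t) (tb t) (tc t) i.

Lemma C2t (t : P) (i : 'I_8) :
  [&& (pN (ta t) (tb t) (tc t) i < 8)%N,
      pN (ta t) (tb t) (tc t) (pN (ta t) (tb t) (tc t) i) == i &
     (s t i == 1) || (s t i == -1)].
Proof. exact: (allnP (all3P C2T (ta t) (tb t) (tc t) (ltn_ord _) (ltn_ord _) (ltn_ord _)) _ (ltn_ord _)). Qed.

Lemma pE t i : val (p t i) = pN (ta t) (tb t) (tc t) i.
Proof. by case/and3P: (C2t t i) => H _ _; rewrite /p /= inordK. Qed.

Lemma pK t : involutive (p t).
Proof.
move=> i; apply: val_inj; rewrite !pE.
by case/and3P: (C2t t i) => _ /eqP.
Qed.

Lemma p_inj t : injective (p t).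
Proof. exact: (can_inj (pK t)). Qed.

Lemma s_pm t i : (s t i = 1) \/ (s t i = -1).
Proof. by case/and3P: (C2t t i) => _ _ /orP [] /eqP ->; [left|right]. Qed.

Lemma ssq t i : s t i * s t i = 1.
Proof. by case: (s_pm t i) => ->; rewrite ?mulr1 ?mulrNN ?mulr1. Qed.

Lemma sprod t : \prod_i s t i = 1.
Proof.
rewrite !big_ord_recr big_ord0 /= mul1r.
exact/eqP/(all3P C4T (ta t) (tb t) (tc t) (ltn_ord _) (ltn_ord _) (ltn_ord _)).
Qed.

Lemma MofE2 t (i j : 'I_8) : Mof t i j = (j == p t i)%:R * s t i.
Proof.
rewrite MofE.
have := allnP (allnP (all3P C1T (ta t) (tb t) (tc t) (ltn_ord _) (ltn_ord _) (ltn_ord _)) _ (ltn_ord i)) _ (ltn_ord j).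
move=> /= H; rewrite (eqP H) /s; congr (_%:R * _).
by rewrite -pE.
Qed.

Lemma actE t (x : vec) i : (Mof t *m x) i 0 = s t i * x (p t i) 0.
Proof.
rewrite mxE (bigD1 (p t i)) //= big1 ?addr0; last first.
  by move=> j /negPf Hj; rewrite MofE2 Hj mul0r mul0r.
by rewrite MofE2 eqxx mul1r.
Qed.


Definition pmul (t u : P) : P :=
  (inord (xr (ta t) (ta u)), inord (xr (tb t) (tb u)), inord (xr (tc t) (tc u))).
Definition t0 : P := (ord0, ord0, ord0).

Lemma C8t (a b : 'I_4) : [&& (xr a b < 4)%N, xr a b == xr b a,
   (xr a a == 0%N) & (xr a b == 0%N) ==> (a == b)].
Proof. exact: (allnP (allnP C8T _ (ltn_ord a)) _ (ltn_ord b)). Qed.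

Lemma xrE (a b : 'I_4) : val (inord (xr a b) : 'I_4) = xr a b.
Proof. by case/and4P: (C8t a b) => H _ _ _; rewrite /= inordK. Qed.

Lemma pmulC t u : pmul t u = pmul u t.
Proof.
rewrite /pmul; case/and4P: (C8t (t.1.1) (u.1.1)) => _ /eqP -> _ _.
case/and4P: (C8t (t.1.2) (u.1.2)) => _ /eqP -> _ _.
by case/and4P: (C8t (t.2) (u.2)) => _ /eqP -> _ _.
Qed.

Lemma pmulxx t : pmul t t = t0.
Proof.
rewrite /pmul; case/and4P: (C8t (t.1.1) (t.1.1)) => _ _ /eqP -> _.
case/and4P: (C8t (t.1.2) (t.1.2)) => _ _ /eqP -> _.
case/and4P: (C8t (t.2) (t.2)) => _ _ /eqP -> _.
by congr (_, _, _); apply: val_inj; rewrite /= inordK.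
Qed.

Lemma pmul_eq0 t u : pmul t u = t0 -> t = u.
Proof.
case: t => [[a b] c]; case: u => [[a' b'] c'] /= [].
move=> /(congr1 val) /=; rewrite xrE => Ha.
move=> /(congr1 val) /=; rewrite xrE => Hb.
move=> /(congr1 val) /=; rewrite xrE => Hc.
case/and4P: (C8t a a') => _ _ _ /implyP /(_ (introT eqP Ha)) /eqP ->.
case/and4P: (C8t b b') => _ _ _ /implyP /(_ (introT eqP Hb)) /eqP ->.
by case/and4P: (C8t c c') => _ _ _ /implyP /(_ (introT eqP Hc)) /eqP ->.
Qed.

Lemma act0 (x : vec) : Mof t0 *m x = x.
Proof.
apply/matrixP => k l; rewrite (ord1 l) actE.
have /andP [/eqP H1 /eqP H2] := allnP C7T _ (ltn_ord k).
have -> : p t0 k = k by apply: val_inj; rewrite pE.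
by rewrite /s /= H2 mul1r.
Qed.

Lemma pauli_compM t u : exists eps : int, (eps = 1 \/ eps = -1) /\
  forall x : vec, Mof u *m (Mof t *m x) = eps *: (Mof (pmul t u) *m x).
Proof.
set tu := pmul t u.
have Hta : ta tu = xr (ta t) (ta u) by rewrite xrE.
have Htb : tb tu = xr (tb t) (tb u) by rewrite xrE.
have Htc : tc tu = xr (tc t) (tc u) by rewrite xrE.
exists (s u 0 * s t (p u 0) * s tu 0); split.
  by case: (s_pm u 0) => ->; case: (s_pm t (p u 0)) => ->; case: (s_pm tu 0) => ->;
    rewrite ?mulr1 ?mulrN1 ?mulN1r ?opprK; auto.
move=> x; apply/matrixP => k l; rewrite (ord1 l) !actE mxE actE.
have := allnP (all3P (all3P C5T (ta t) (tb t) (tc t) (ltn_ord _) (ltn_ord _) (ltn_ord _))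
   (ta u) (tb u) (tc u) (ltn_ord (u.1.1)) (ltn_ord (u.1.2)) (ltn_ord (u.2))) _ (ltn_ord k).
move=> H.
have Hp : pN (ta t) (tb t) (tc t) (pN (ta u) (tb u) (tc u) k)
   = pN (xr (ta t) (ta u)) (xr (tb t) (tb u)) (xr (tc t) (tc u)) k.
  by case/andP: H => /eqP.
have Hs : sN (ta u) (tb u) (tc u) k * sN (ta t) (tb t) (tc t) (pN (ta u) (tb u) (tc u) k)
   = (sN (ta u) (tb u) (tc u) 0 * sN (ta t) (tb t) (tc t) (pN (ta u) (tb u) (tc u) 0) *
      sN (xr (ta t) (ta u)) (xr (tb t) (tb u)) (xr (tc t) (tc u)) 0) *
      sN (xr (ta t) (ta u)) (xr (tb t) (tb u)) (xr (tc t) (tc u)) k.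
  by case/andP: H => _ /eqP.
have -> : p t (p u k) = p tu k by apply: val_inj; rewrite !pE Hta Htb Htc.
rewrite mulrA [in RHS]mulrA; congr (_ * _).
rewrite /s !pE Hta Htb Htc.


exact: Hs.
Qed.

Lemma candsP (x : vec) : reflect (forall i, x i 0 \in [:: -1; 0; 1]) (x \in cands).
Proof.
apply: (iffP idP).
  case/mapP => f _ -> i; rewrite mxE.
  by case: (f i) => [[|[|[|k]]] Hk].
move=> H; apply/mapP; exists [ffun i => inord (absz (x i 0 + 1))]; first by rewrite mem_enum.
apply/matrixP => i j; rewrite (ord1 j) mxE ffunE.
by move: (H i); rewrite !inE => /or3P [] /eqP ->; rewrite inordK.
Qed.

Lemma act_cands t (x : vec) : x \in cands -> Mof t *m x \in cands.
Proof.
move/candsP => H; apply/candsP => i; rewrite actE.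
by move: (H (p t i)); case: (s_pm t i) => ->; rewrite !inE => /or3P [] /eqP ->.
Qed.

Lemma eE t i : Mof t *m e i = s t (p t i) *: e (p t i).
Proof.
apply/matrixP => k l; rewrite (ord1 l) actE !mxE /= !andbT.
have -> : (p t k == i) = (k == p t i).
  by apply/eqP/eqP => [<-|->]; rewrite pK.
by case: eqP => [->|]; rewrite ?mulr1 ?mulr0.
Qed.

Lemma sgnE t i : s t i = sgn (s t i == -1).
Proof. by case: (s_pm t i) => ->; rewrite /sgn //. Qed.

Lemma prod_p t (F : 'I_8 -> int) : \prod_i F (p t i) = \prod_i F i.
Proof. by rewrite [RHS](reindex_inj (p_inj t)). Qed.
Lemma sum_p t (F : 'I_8 -> int) : \sum_i F (p t i) = \sum_i F i.
Proof. by rewrite [RHS](reindex_inj (p_inj t)). Qed.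

Lemma root_act t x : is_root x -> is_root (Mof t *m x).
Proof.
move=> /orP [/existsP [i /existsP [j /existsP [s1 /existsP [s2 /andP [lij /eqP ->]]]]]
  | /andP [/forallP H1 /eqP H2]].
  rewrite mulmxDr -!scalemxAr !eE !scalerA (sgnE t (p t i)) (sgnE t (p t j)) /sgn
    -!signr_addb.
  apply/orP; left.
  have nij : p t i != p t j.
    by apply/negP => /eqP /p_inj Hij; move: lij; rewrite Hij ltnn.
  case: (ltngtP (p t i) (p t j)) => H.
  - apply/existsP; exists (p t i); apply/existsP; exists (p t j).
    apply/existsP; exists (s1 (+) (s t (p t i) == -1)).
    apply/existsP; exists (s2 (+) (s t (p t j) == -1)); by rewrite H /sgn eqxx.
  - apply/existsP; exists (p t j); apply/existsP; exists (p t i).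
    apply/existsP; exists (s2 (+) (s t (p t j) == -1)).
    apply/existsP; exists (s1 (+) (s t (p t i) == -1)); by rewrite H addrC /sgn eqxx.
  - by move: nij; rewrite (val_inj H) eqxx.
apply/orP; right; apply/andP; split.
  apply/forallP => i; rewrite actE.
  by move: (H1 (p t i)); case: (s_pm t i) => -> /orP [] /eqP ->; rewrite ?eqxx ?orbT.
rewrite (eq_bigr (fun i => s t i * x (p t i) 0)); last by move=> i _; rewrite actE.
rewrite big_split /= sprod mul1r.
by rewrite (prod_p t (fun i => x i 0)) H2.
Qed.

Lemma dotE (x y : vec) : dot x y = \sum_i x i 0 * y i 0.
Proof. by rewrite /dot mxE; apply: eq_bigr => i _; rewrite mxE. Qed.

Lemma dot_act t x y : dot (Mof t *m x) (Mof t *m y) = dot x y.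
Proof.
rewrite !dotE (eq_bigr (fun i => x (p t i) 0 * y (p t i) 0)).
  by rewrite (sum_p t (fun i => x i 0 * y i 0)).
move=> i _; rewrite !actE mulrACA ssq mul1r //.
Qed.

Lemma dotNl (x y : vec) : dot (- x) y = - dot x y.
Proof. by rewrite !dotE -sumrN; apply: eq_bigr => i _; rewrite mxE mulNr. Qed.
Lemma dotNr (x y : vec) : dot x (- y) = - dot x y.
Proof. by rewrite !dotE -sumrN; apply: eq_bigr => i _; rewrite mxE mulrN. Qed.

Lemma act_psi t (v : vec) : v \in psi_seq -> Mof t *m v \in psi_seq.
Proof.
rewrite !mem_filter => /andP [H1 H2].
by rewrite root_act // act_cands.
Qed.

Definition ract t (x : Root) : Root := Sub (Mof t *m val x) (@act_psi t (val x) (valP x)).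
Lemma ractE t x : val (ract t x) = Mof t *m val x.
Proof. by rewrite /ract SubK. Qed.

Definition pm (x y : Root) := val y = val x \/ val y = - val x.

Lemma line_eq x y : line x = line y <-> pm x y.
Proof.
split.
  move=> H; have : x \in line y by rewrite -H inE eqxx.
  rewrite /pm inE => /orP [/eqP ->|/eqP ->]; [left | right]; by rewrite ?opprK.
rewrite /pm; case=> H; apply/setP => z; rewrite !inE H ?opprK //.
by rewrite orbC.
Qed.

Lemma vtx_eq x y : vtx x = vtx y <-> pm x y.
Proof.
split; first by move/(congr1 val) => /= /line_eq.
by move=> /line_eq H; apply: val_inj.
Qed.

Definition rep (v : V) : Root := iinv (valP v).
Lemma repK v : vtx (rep v) = v.
Proof. by apply: val_inj; rewrite /= f_iinv. Qed.

Lemma pm_ract t x y : pm x y -> pm (ract t x) (ract t y).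
Proof. by rewrite /pm !ractE; case=> ->; [left | right; rewrite mulmxN]. Qed.

Definition vmap t (v : V) : V := vtx (ract t (rep v)).

Lemma vmap_vtx t x : vmap t (vtx x) = vtx (ract t x).
Proof.
apply/vtx_eq; apply: pm_ract.
have : vtx (rep (vtx x)) = vtx x by rewrite repK.
case/vtx_eq => H; [left | right]; by rewrite H ?opprK.
Qed.

Lemma vmap_comp t u v : vmap u (vmap t v) = vmap (pmul t u) v.
Proof.
rewrite -(repK v) !vmap_vtx; apply/vtx_eq.
have [eps [He H]] := pauli_compM t u.
rewrite /pm !ractE H; case: He => ->; [left; rewrite scale1r | right; rewrite scaleN1r opprK] => //.
Qed.

Lemma vmap0 v : vmap t0 v = v.
Proof.
rewrite -(repK v) vmap_vtx; apply/vtx_eq; left.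
by rewrite ractE act0.
Qed.

Lemma vmapK t : involutive (vmap t).
Proof. by move=> v; rewrite vmap_comp pmulxx vmap0. Qed.

Definition sigma t : {perm V} := perm (can_inj (vmapK t)).

Lemma sigmaE t v : sigma t v = vmap t v.
Proof. by rewrite permE. Qed.

Lemma adj_vtx x y : adj (vtx x) (vtx y) = (dot (val x) (val y) == 0).
Proof.
apply/idP/idP.
  case/existsP => x' /andP [Hx /existsP [y' /andP [Hy Hd]]].
  have Hx' : pm x x' by move: Hx; rewrite /pm inE => /orP [] /eqP ->; [left | right].
  have Hy' : pm y y' by move: Hy; rewrite /pm inE => /orP [] /eqP ->; [left | right].
  move: Hd; case: Hx' => ->; case: Hy' => ->; by rewrite ?dotNl ?dotNr ?opprK ?oppr_eq0.
move=> H; apply/existsP; exists x; rewrite /= inE eqxx /=.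
by apply/existsP; exists y; rewrite inE eqxx.
Qed.

Lemma sigma_aut t : sigma t \in Aut_G.
Proof.
rewrite inE; apply/forallP => u; apply/forallP => w.
rewrite !sigmaE -(repK u) -(repK w) !vmap_vtx !adj_vtx !ractE dot_act //.
Qed.

Lemma sigmaM t u : (sigma t * sigma u)%g = sigma (pmul t u).
Proof. by apply/permP => v; rewrite permM !sigmaE vmap_comp. Qed.

Lemma sigma0 : sigma t0 = 1%g.
Proof. by apply/permP => v; rewrite perm1 sigmaE vmap0. Qed.


Lemma eijE (i j : 'I_8) k : (e i + e j) k 0 = xf i j k.
Proof. by rewrite !mxE /xf /= !andbT. Qed.

Lemma eij_psi (i j : 'I_8) : (i < j)%N -> e i + e j \in psi_seq.
Proof.
move=> lij; rewrite mem_filter; apply/andP; split.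
  apply/orP; left; apply/existsP; exists i; apply/existsP; exists j.
  apply/existsP; exists false; apply/existsP; exists false.
  by rewrite lij /sgn !scale1r eqxx.
apply/candsP => k; rewrite eijE /xf.
have nij : (i : nat) != j by rewrite neq_ltn lij.
case: (eqVneq (k : nat) i) => [Hk|Hk]; case: (eqVneq (k : nat) j) => [Hk'|Hk'] //.
by move: nij; rewrite -Hk -Hk' eqxx.
Qed.

Lemma nontriv w : sigma w = 1%g -> w = t0.
Proof.
move=> Hw.
have := all3P C6T (ta w) (tb w) (tc w) (ltn_ord _) (ltn_ord _) (ltn_ord _).
case/orP.
  case/andP => /andP [/eqP Ha /eqP Hb] /eqP Hc.
  case: w Hw Ha Hb Hc => [[a b] c] /= _ Ha Hb Hc.
  by congr (_, _, _); apply: val_inj.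
case/hasP => i; rewrite mem_iota add0n => Hi.
case/hasP => j; rewrite mem_iota add0n => Hj.
case/and3P => lij /hasP [k]; rewrite mem_iota add0n => Hk Hk1 /hasP [k']; rewrite mem_iota add0n => Hk' Hk2.
pose i' : 'I_8 := Ordinal Hi. pose j' : 'I_8 := Ordinal Hj.
pose x : Root := Sub (e i' + e j') (@eij_psi i' j' lij).
have : sigma w (vtx x) = vtx x by rewrite Hw perm1.
rewrite sigmaE vmap_vtx => /vtx_eq; rewrite /pm ractE /= => Hpm.
have Hent : forall l : 'I_8, (Mof w *m (e i' + e j')) l 0 = sN (ta w) (tb w) (tc w) l * xf i j (pN (ta w) (tb w) (tc w) l).
  by move=> l; rewrite actE eijE pE.
case: Hpm => Hpm.
  move: Hk1; have := congr1 (fun m : vec => m (Ordinal Hk) 0) Hpm => /=.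
  by rewrite eijE Hent => ->; rewrite eqxx.
move: Hk2; have := congr1 (fun m : vec => m (Ordinal Hk') 0) Hpm => /=.
by rewrite eijE mxE Hent => ->; rewrite opprK eqxx.
Qed.

Lemma sigma_inj : injective sigma.
Proof.
move=> t u H; apply: pmul_eq0; apply: nontriv.
by rewrite -sigmaM H sigmaM pmulxx sigma0.
Qed.

Definition S := [set sigma t | t : P].

Lemma gsS : group_set S.
Proof.
apply/group_setP; split.
  by rewrite -sigma0; apply: imset_f.
move=> x y /imsetP [t _ ->] /imsetP [u _ ->].
by rewrite sigmaM; apply: imset_f.
Qed.

Definition L := Group gsS.

Lemma abelL : (2.-abelem L)%g.
Proof.
apply/abelemP => //; split.
  apply/centsP => x /imsetP [t _ ->] y /imsetP [u _ ->].
  by rewrite /commute !sigmaM pmulC.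
move=> x /imsetP [t _ ->].
by rewrite expgS expg1 sigmaM pmulxx sigma0.
Qed.

Lemma cardL : #|L| = 64%N.
Proof.
rewrite /= /S card_imset; last exact: sigma_inj.
by rewrite !card_prod !card_ord.
Qed.

Lemma isoL : L \isog [set: 'rV['Z_2]_6].
Proof.
rewrite (isog_abelem_card _ abelL) cardL cardsT card_mx card_ord.
rewrite eqxx andbT.
exact: (@mx_Fp_abelem 2 1 6 isT).
Qed.

Theorem lemma3p2 :
  exists sigma : P -> {perm V},
    (forall (t : P) (x : Root),
        exists y : Root, val y = Mof t *m val x /\ sigma t (vtx x) = vtx y)
    /\ (forall t : P, sigma t \in Aut_G)
    /\ exists L : {group {perm V}},
         [/\ L :=: [set sigma t | t : P], L \subset Aut_G
           & L \isog [set: 'rV['Z_2]_6]].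
Proof.
exists sigma; split.
  move=> t x; exists (ract t x); split; first exact: ractE.
  by rewrite sigmaE vmap_vtx.
split; first exact: sigma_aut.
exists L; split => //.
  by apply/subsetP => x /imsetP [t _ ->]; apply: sigma_aut.
exact: isoL.
Qed.
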